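(* Let $G$ be a group, $\phi\in\mathrm{Aut}(G)$, $K\subseteq G\rtimes_\phi\mathbb{Z}$ and $t^rg\in G\rtimes_\phi\mathbb{Z}$ (with $r\in\mathbb{Z}$, $g\in G$). For $m\in\mathbb{Z}$ put $K_m=\{x\in G\mid t^mx\in K\}$. (i) If $r=0$, then $g$ is conjugate in $G\rtimes_\phi\mathbb{Z}$ to an element of $K$ if and only if there exists $k\in\mathbb{Z}$ such that $\phi^k(g)$ is conjugate in $G$ to an element of $K_0$. (ii) If $r\neq 0$, then $t^rg$ is conjugate in $G\rtimes_\phi\mathbb{Z}$ to an element of $K$ if and only if there exist $j\in\{0,1,\ldots,|r|-1\}$ and $z\in G$ such that $\phi^r(z)^{-1}\,\phi^j(g)\,z\in K_r$.
   Context: $G\rtimes_\phi\mathbb{Z}$ denotes the group generated by $G$ and a letter $t$ subject to the relations of $G$ and $t^{-1}at=\phi(a)$ for $a\in G$; every element is uniquely of the form $t^ag$ with $a\in\mathbb{Z}$, $g\in G$. The paper phrases the result as an equivalence of decision problems: $GCP_{(K,t^rg)}(G\rtimes_\phi\mathbb{Z})$ (does $t^rg$ have a conjugate in $K$) is equivalent to $GBrCP_{(K_0,\phi,g)}(G)$ when $r=0$, and to the disjunction over $j$ of $GTCP_{(K_r,\phi^r,\phi^j(g))}(G)$ (does $\phi^j(g)$ have a $\phi^r$-twisted conjugate $\phi^r(z)^{-1}\phi^j(g)z$ in $K_r$) when $r\neq0$. *)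

(* Defs.v *)
From Stdlib Require Import ZArith.
Open Scope Z_scope.

Record Group := {
  carrier :> Type;
  gmul : carrier -> carrier -> carrier;
  gone : carrier;
  ginv : carrier -> carrier;
  gmulA : forall x y z, gmul x (gmul y z) = gmul (gmul x y) z;
  gmul1 : forall x, gmul gone x = x;
  gmulV : forall x, gmul (ginv x) x = gone
}.

Arguments gmul {G} : rename.
Arguments gone {G} : rename.
Arguments ginv {G} : rename.

Record Aut (G : Group) := {
  aut :> G -> G;
  aut_inv : G -> G;
  aut_mul : forall x y, aut (gmul x y) = gmul (aut x) (aut y);
  aut_K : forall x, aut_inv (aut x) = x;
  aut_invK : forall x, aut (aut_inv x) = x
}.

Arguments aut_inv {G}.

Definition autpow {G : Group} (phi : Aut G) (k : Z) : G -> G :=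
  fun x => if (0 <=? k) then Nat.iter (Z.to_nat k) (aut G phi) x
           else Nat.iter (Z.to_nat (- k)) (aut_inv phi) x.

(* The semidirect product G x|_phi Z: the pair (a, g) represents t^a g,
   with t^{-1} x t = phi(x), so (t^a g)(t^b h) = t^(a+b) phi^b(g) h. *)
Definition sd_elt (G : Group) := (Z * G)%type.

Definition sd_mul {G : Group} (phi : Aut G) (x y : sd_elt G) : sd_elt G :=
  (fst x + fst y, gmul (autpow phi (fst y) (snd x)) (snd y)).

Definition sd_inv {G : Group} (phi : Aut G) (x : sd_elt G) : sd_elt G :=
  (- fst x, autpow phi (- fst x) (ginv (snd x))).

Definition sd_conj_into {G : Group} (phi : Aut G) (x : sd_elt G)
  (K : sd_elt G -> Prop) : Prop :=
  exists w : sd_elt G, K (sd_mul phi (sd_mul phi (sd_inv phi w) x) w).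

Definition conj_into {G : Group} (x : G) (L : G -> Prop) : Prop :=
  exists z : G, L (gmul (gmul (ginv z) x) z).

Definition slice {G : Group} (K : sd_elt G -> Prop) (m : Z) : G -> Prop :=
  fun x => K (m, x).

(* Main.v *)
Require Import Defs.
From Stdlib Require Import ZArith Lia.
Open Scope Z_scope.

Lemma g_mulV' (G : Group) (x : G) : gmul x (ginv x) = gone.
Proof.
  set (y := ginv x).
  rewrite <- (gmul1 G (gmul x y)).
  rewrite <- (gmulV G y) at 1.
  rewrite <- gmulA. rewrite (gmulA G y x y). unfold y at 2 3. rewrite gmulV, gmul1.
  apply gmulV.
Qed.

Lemma g_mul1r (G : Group) (x : G) : gmul x gone = x.
Proof. rewrite <- (gmulV G x), gmulA, g_mulV', gmul1. reflexivity. Qed.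

Lemma g_cancel (G : Group) (a b c : G) : gmul a b = gmul a c -> b = c.
Proof.
  intro H. rewrite <- (gmul1 G b), <- (gmul1 G c), <- (gmulV G a), <- !gmulA, H.
  reflexivity.
Qed.

Lemma g_inv_uniq (G : Group) (a b : G) : gmul a b = gone -> a = ginv b.
Proof.
  intro H. rewrite <- (g_mul1r G a), <- (g_mulV' G b), gmulA, H, gmul1. reflexivity.
Qed.

Lemma g_invM (G : Group) (a b : G) : ginv (gmul a b) = gmul (ginv b) (ginv a).
Proof.
  symmetry. apply g_inv_uniq.
  rewrite <- gmulA, (gmulA G (ginv a) a b), gmulV, gmul1, gmulV. reflexivity.
Qed.

Lemma g_invK (G : Group) (a : G) : ginv (ginv a) = a.
Proof. symmetry. apply g_inv_uniq. apply g_mulV'. Qed.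

Lemma autpow_S (G : Group) (phi : Aut G) k x :
  autpow phi (k + 1) x = phi (autpow phi k x).
Proof.
  unfold autpow.
  destruct (Z.leb_spec 0 k).
  - rewrite (proj2 (Z.leb_le 0 (k+1))) by lia.
    replace (Z.to_nat (k+1)) with (S (Z.to_nat k)) by lia. reflexivity.
  - destruct (Z.eq_dec k (-1)).
    + subst. simpl. rewrite aut_invK. reflexivity.
    + rewrite (proj2 (Z.leb_gt 0 (k+1))) by lia.
      replace (Z.to_nat (-k)) with (S (Z.to_nat (-(k+1)))) by lia.
      simpl. rewrite aut_invK. reflexivity.
Qed.

Lemma autpow_P (G : Group) (phi : Aut G) k x :
  autpow phi (k - 1) x = aut_inv phi (autpow phi k x).
Proof.
  replace k with (k - 1 + 1) at 2 by lia. rewrite autpow_S, aut_K. reflexivity.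
Qed.

Lemma autpow0 (G : Group) (phi : Aut G) x : autpow phi 0 x = x.
Proof. reflexivity. Qed.

Lemma autpow_add (G : Group) (phi : Aut G) a b x :
  autpow phi a (autpow phi b x) = autpow phi (a + b) x.
Proof.
  revert x. induction a using Z.peano_ind; intro x.
  - reflexivity.
  - rewrite <- Z.add_1_r, autpow_S, IHa.
    replace (a + 1 + b) with ((a + b) + 1) by lia. rewrite autpow_S. reflexivity.
  - rewrite <- Z.sub_1_r, autpow_P, IHa.
    replace (a - 1 + b) with ((a + b) - 1) by lia. rewrite autpow_P. reflexivity.
Qed.

Lemma autinv_mul (G : Group) (phi : Aut G) x y :
  aut_inv phi (gmul x y) = gmul (aut_inv phi x) (aut_inv phi y).
Proof.
  rewrite <- (aut_invK G phi x) at 1. rewrite <- (aut_invK G phi y) at 1.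
  rewrite <- aut_mul, aut_K. reflexivity.
Qed.

Lemma autpow_mul (G : Group) (phi : Aut G) k x y :
  autpow phi k (gmul x y) = gmul (autpow phi k x) (autpow phi k y).
Proof.
  induction k using Z.peano_ind.
  - reflexivity.
  - rewrite <- Z.add_1_r, !autpow_S, IHk, aut_mul. reflexivity.
  - rewrite <- Z.sub_1_r, !autpow_P, IHk, autinv_mul. reflexivity.
Qed.

Lemma autpow_inv (G : Group) (phi : Aut G) k x :
  autpow phi k (ginv x) = ginv (autpow phi k x).
Proof.
  apply g_inv_uniq. rewrite <- autpow_mul, gmulV.
  apply (g_cancel G (autpow phi k gone)).
  rewrite <- autpow_mul, !gmul1, g_mul1r. reflexivity.
Qed.

Lemma conj_formula (G : Group) (phi : Aut G) c (z : G) r (g : G) :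
  sd_mul phi (sd_mul phi (sd_inv phi (c, z)) (r, g)) (c, z) =
  (r, gmul (gmul (ginv (autpow phi r z)) (autpow phi c g)) z).
Proof.
  unfold sd_mul, sd_inv; simpl. f_equal; [lia|].
  rewrite autpow_mul, !autpow_add.
  match goal with |- context [autpow phi ?e (ginv z)] =>
    replace e with r by lia end.
  rewrite autpow_inv. reflexivity.
Qed.

Lemma conj_iff (G : Group) (phi : Aut G) K r (g : G) :
  sd_conj_into phi (r, g) K <->
  exists c z, K (r, gmul (gmul (ginv (autpow phi r z)) (autpow phi c g)) z).
Proof.
  split.
  - intros [[c z] H]. rewrite conj_formula in H. eauto.
  - intros [c [z H]]. exists (c, z). rewrite conj_formula. exact H.
Qed.

Definition EE (G : Group) (phi : Aut G) r (g : G) c (z : G) :=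
  gmul (gmul (ginv (autpow phi r z)) (autpow phi c g)) z.

Lemma shift_down (G : Group) (phi : Aut G) r g c z :
  EE G phi r g (c + r) z = EE G phi r g c (gmul (ginv (autpow phi c g)) z).
Proof.
  unfold EE. rewrite autpow_mul, autpow_inv, autpow_add, g_invM.
  rewrite (Z.add_comm c r).
  set (A := autpow phi (r + c) g). set (B := autpow phi c g).
  rewrite (g_invK G A).
  rewrite <- !gmulA. f_equal. f_equal. rewrite (gmulA G B), g_mulV', gmul1.
  reflexivity.
Qed.

Lemma shift_up (G : Group) (phi : Aut G) r g c z :
  EE G phi r g c z = EE G phi r g (c + r) (gmul (autpow phi c g) z).
Proof.
  rewrite shift_down, gmulA, gmulV, gmul1. reflexivity.
Qed.

Lemma shift_n (G : Group) (phi : Aut G) r g n :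
  forall c z, exists z', EE G phi r g (c + r * n) z = EE G phi r g c z'.
Proof.
  induction n using Z.peano_ind; intros c z.
  - exists z. rewrite Z.mul_0_r, Z.add_0_r. reflexivity.
  - replace (c + r * Z.succ n) with ((c + r * n) + r) by lia.
    rewrite shift_down. apply IHn.
  - rewrite shift_up.
    replace (c + r * Z.pred n + r) with (c + r * n) by lia. apply IHn.
Qed.

Theorem theorem3p1 (G : Group) (phi : Aut G) (K : sd_elt G -> Prop)
  (r : Z) (g : G) :
  (r = 0 ->
     (sd_conj_into phi (0, g) K <->
      exists k : Z, conj_into (autpow phi k g) (slice K 0))) /\
  (r <> 0 ->
     (sd_conj_into phi (r, g) K <->
      exists j : Z, 0 <= j < Z.abs r /\
        exists z : G,
          slice K r (gmul (gmul (ginv (autpow phi r z)) (autpow phi j g)) z))).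
Proof.
  split.
  - intros _. rewrite conj_iff. unfold conj_into, slice. simpl. reflexivity.
  - intros Hr. rewrite conj_iff. unfold slice. split.
    + intros [c [z H]].
      assert (Ha : 0 < Z.abs r) by lia.
      exists (c mod Z.abs r). split; [apply Z.mod_pos_bound; exact Ha|].
      pose proof (Z.div_mod c (Z.abs r) ltac:(lia)) as Hc.
      set (q := c / Z.abs r) in Hc. set (j := c mod Z.abs r) in Hc |- *.
      assert (Hn : exists n, c = j + r * n).
      { destruct (Z.abs_eq_or_opp r) as [E|E]; rewrite E in Hc.
        - exists q. lia.
        - exists (- q). rewrite Hc. ring. }
      destruct Hn as [n Hn].
      destruct (shift_n G phi r g n j z) as [z' Hz'].
      exists z'. change (K (r, EE G phi r g j z')). rewrite <- Hz', <- Hn. exact H.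
    + intros [j [_ [z H]]]. eauto.
Qed.
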